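(* Let $d\in\mathbb{Z}^+$ and let $\Pi=\langle Q,Q_0,Q_1,q_{init},\delta\rangle$ be a 1-aware population protocol computing the predicate $R(n)=\mathbb{I}\{n\ge d\}$. For $q\in Q$ let $f(q)$ be the minimal $n\in\mathbb{Z}^+$ such that $q$ can occur from $I_n$, and $f(q)=+\infty$ if there is no such $n$. If $a<b$ are two consecutive elements of the set $f(Q)\cap\mathbb{Z}^+$ (i.e. $a,b\in f(Q)\cap\mathbb{Z}^+$ and no element of $f(Q)$ lies strictly between them), then $b\le 2a$.
   Context: A population protocol is a tuple $\Pi=\langle Q,Q_0,Q_1,q_{init},\delta\rangle$ where $Q$ is a finite set of states, $Q=Q_0\sqcup Q_1$ (disjoint union), $q_{init}\in Q$ is the initial state, and $\delta\colon Q^2\to 2^{Q^2}\setminus\{\varnothing\}$ is the transition function. For $n\in\mathbb{Z}^+$, an $n$-size configuration is a function $C\colon[n]\to Q$, where $[n]=\{1,\dots,n\}$; the initial configuration $I_n$ maps every element to $q_{init}$. A pair $(C_1,C_2)$ of $n$-size configurations is a transition if there are distinct $i,j\in[n]$ with $(C_2(i),C_2(j))\in\delta(C_1(i),C_1(j))$ and $C_2(k)=C_1(k)$ for all $k\ne i,j$ (the pair $(i,j)$ is ordered). $D$ is reachable from $C$ if there is a finite sequence $C=C_1,\dots,C_k=D$ ($k\ge1$) of configurations with each $(C_i,C_{i+1})$ a transition. A state $q$ can occur from a configuration $C\colon[n]\to Q$ if some configuration $D$ reachable from $C$ has $D(i)=q$ for some $i\in[n]$. An execution is an infinite sequence $(C_i)_{i\ge1}$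 with $C_1=I_n$ for some $n$ and each $(C_i,C_{i+1})$ a transition; it is fair if whenever a configuration $C$ occurs infinitely often in it and $D$ is reachable from $C$, then $D$ also occurs infinitely often. $\Pi$ is a 1-aware population protocol computing $R\colon\mathbb{Z}^+\to\{0,1\}$ if for every $n\in\mathbb{Z}^+$: if $R(n)=0$ then every configuration $C$ reachable from $I_n$ satisfies $C([n])\subseteq Q_0$; and if $R(n)=1$ then for every fair execution $(C_i)_{i\ge1}$ with $C_1=I_n$ there is $i_0$ such that $C_i([n])\subseteq Q_1$ for all $i\ge i_0$. *)

(* Defs.v *)
From mathcomp Require Import all_boot.
Set Implicit Arguments. Unset Strict Implicit. Unset Printing Implicit Defensive.

(* A population protocol over a finite state type Q:
   Q1 : pred Q gives the partition Q = Q0 ⊔ Q1 with Q0 = complement of Q1,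
   qinit : initial state, delta p q : the set of possible outcome pairs
   (nonemptiness of delta p q is a hypothesis of the theorem). *)

Section Protocol.
Variables (Q : finType) (Q1 : pred Q) (qinit : Q) (delta : Q -> Q -> pred (Q * Q)).

Definition config (n : nat) := {ffun 'I_n -> Q}.

Definition init_config (n : nat) : config n := [ffun => qinit].

Definition transition (n : nat) (C1 C2 : config n) : Prop :=
  exists i j : 'I_n, i != j /\ delta (C1 i) (C1 j) (C2 i, C2 j) /\
    (forall k, k != i -> k != j -> C2 k = C1 k).

Inductive reachable (n : nat) : config n -> config n -> Prop :=
| reach_refl C : reachable C C
| reach_step C D E : transition C D -> reachable D E -> reachable C E.

Definition can_occur (q : Q) (n : nat) : Prop :=
  exists D : config n, reachable (init_config n) D /\ exists i, D i = q.

Definition execution (n : nat) (e : nat -> config n) : Prop :=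
  e 0 = init_config n /\ forall t, transition (e t) (e t.+1).

Definition fair (n : nat) (e : nat -> config n) : Prop :=
  forall C : config n, (forall N, exists t, N <= t /\ e t = C) ->
    forall D, reachable C D -> forall N, exists t, N <= t /\ e t = D.

Definition one_aware_computes (R : nat -> bool) : Prop :=
  forall n, 0 < n ->
    (R n = false -> forall C, reachable (init_config n) C -> forall i, ~~ Q1 (C i)) /\
    (R n = true -> forall e : nat -> config n, execution e -> fair e ->
       exists i0, forall i, i0 <= i -> forall k, Q1 (e i k)).

(* f q = m (with m a positive integer): m is the least positive n such that
   q can occur from I_n. *)
Definition f_is (q : Q) (m : nat) : Prop :=
  0 < m /\ can_occur q m /\ forall k, 0 < k -> k < m -> ~ can_occur q k.

Definition in_fQ (m : nat) : Prop := exists q, f_is q m.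

End Protocol.

(* Main.v *)
Require Import Defs.
From mathcomp Require Import all_boot.
From Stdlib Require Import Classical.

Set Implicit Arguments.
Section Aux.
Variables (Q : finType) (qinit : Q) (delta : Q -> Q -> pred (Q * Q)).

Lemma reach_trans n (C D E : config Q n) :
  reachable delta C D -> reachable delta D E -> reachable delta C E.
Proof.
elim=> [//|C1 D1 E1 T _ IH] H; exact: reach_step T (IH H).
Qed.

Definition upd n (C : config Q n) (i j : 'I_n) (x y : Q) : config Q n :=
  [ffun k => if k == i then x else if k == j then y else C k].

Lemma upd_trans n (C : config Q n) i j x y :
  i != j -> delta (C i) (C j) (x, y) -> transition delta C (upd C i j x y).
Proof.
move=> ij dl; exists i, j; split=> //; split.
  by rewrite /upd !ffunE eqxx eq_sym (negbTE ij) eqxx.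
by move=> k ki kj; rewrite /upd ffunE (negbTE ki) (negbTE kj).
Qed.

Lemma lift_reach n N (h : 'I_n -> 'I_N) (hinj : injective h)
  (C D : config Q n) : reachable delta C D ->
  forall E : config Q N, (forall i, E (h i) = C i) ->
  exists E', reachable delta E E' /\ (forall i, E' (h i) = D i) /\
    (forall k, (forall i, k != h i) -> E' k = E k).
Proof.
elim=> [C0|C0 D0 E0 [i [j [ij [dl oth]]]] _ IH] E HE.
  exists E; split; first exact: reach_refl. by split.
have hij : h i != h j by apply: contra ij => /eqP /hinj ->.
have HE1 : forall l, upd E (h i) (h j) (D0 i) (D0 j) (h l) = D0 l.
  move=> l; rewrite /upd ffunE.
  case: (eqVneq l i) => [->|li]; first by rewrite eqxx.
  rewrite (inj_eq hinj) (negbTE li).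
  case: (eqVneq l j) => [->|lj]; first by rewrite eqxx.
  by rewrite (inj_eq hinj) (negbTE lj) HE oth.
have [E' [R1 [R2 R3]]] := IH _ HE1.
exists E'; split.
  apply: reach_step R1; apply: upd_trans => //; by rewrite !HE.
split=> // k Hk; rewrite R3 // /upd ffunE.
by rewrite (negbTE (Hk i)) (negbTE (Hk j)).
Qed.

Lemma combine p p' k1 k2 r1 r2 :
  can_occur qinit delta p k1 -> can_occur qinit delta p' k2 ->
  delta p p' (r1, r2) ->
  can_occur qinit delta r1 (k1 + k2) /\ can_occur qinit delta r2 (k1 + k2).
Proof.
move=> [D1 [R1 [i1 Hi1]]] [D2 [R2 [i2 Hi2]]] dl.
have [E1 [S1 [S2 S3]]] := lift_reach (@lshift_inj k1 k2) R1
  (init_config qinit (k1 + k2)) (fun i => ltac:(by rewrite !ffunE)).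
have disj : forall (i : 'I_k1) (j : 'I_k2), rshift k1 j != lshift k2 i.
  move=> i j; apply/eqP => /(congr1 val) /= E.
  by have := ltn_ord i; rewrite -E ltnNge leq_addr.
have [E2 [T1 [T2 T3]]] := lift_reach (@rshift_inj k1 k2) R2 E1
  (fun j => ltac:(by rewrite S3 ?ffunE // => i; apply: disj)).
have ne : lshift k2 i1 != rshift k1 i2 by rewrite eq_sym disj.
have Hl : E2 (lshift k2 i1) = p.
  by rewrite T3 ?S2 // => j; rewrite eq_sym disj.
have tr := @upd_trans _ E2 _ _ r1 r2 ne.
rewrite Hl T2 Hi2 in tr; have {}tr := tr dl.
have RR : reachable delta (init_config qinit (k1 + k2))
   (upd E2 (lshift k2 i1) (rshift k1 i2) r1 r2).
  apply: reach_trans S1 (reach_trans T1 _).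
  by apply: reach_step tr (reach_refl _ _).
split; eexists; split; try exact: RR.
  by exists (lshift k2 i1); rewrite /upd ffunE eqxx.
by exists (rshift k1 i2); rewrite /upd ffunE eq_sym (negbTE ne) eqxx.
Qed.

Lemma minimal r N : can_occur qinit delta r N ->
  exists m, m <= N /\ can_occur qinit delta r m /\
    forall k, k < m -> ~ can_occur qinit delta r k.
Proof.
move=> HC0.
suff H : forall K M, M <= K -> can_occur qinit delta r M -> exists m, m <= M /\ can_occur qinit delta r m /\
    forall k, k < m -> ~ can_occur qinit delta r k by exact: (H N N (leqnn N) HC0).
clear HC0 N; elim=> [|K IH] M HM HC.
  exists M; split=> //; split=> // k; move: HM; rewrite leqn0 => /eqP ->; by [].
case: (classic (exists k, k < M /\ can_occur qinit delta r k)).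
  move=> [k [kM Ck]].
  have kK : k <= K by rewrite -ltnS (leq_trans kM HM).
  have [m [m1 [m2 m3]]] := IH k kK Ck.
  by exists m; split=> //; apply: leq_trans m1 (ltnW kM).
move=> Hn; exists M; split=> //; split=> // k kM Ck; apply: Hn; by exists k.
Qed.

Lemma no_occur0 r : ~ can_occur qinit delta r 0.
Proof. by move=> [D [_ [[i Hi] _]]]. Qed.

End Aux.

Theorem lemma1 (d : nat) (Q : finType) (Q1 : pred Q) (qinit : Q)
    (delta : Q -> Q -> pred (Q * Q)) :
  0 < d ->
  (forall p q, exists r, delta p q r) ->
  one_aware_computes Q1 qinit delta (fun n => d <= n) ->
  forall a b : nat, a < b ->
    in_fQ qinit delta a -> in_fQ qinit delta b ->
    (forall c, a < c -> c < b -> ~ in_fQ qinit delta c) ->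
    b <= 2 * a.
Proof.
move=> _ _ _ a b ab [qa [a0 _]] [q [b0 [[D [RD [iq Hq]]] qmin]]] gap.
pose S x := exists k, 0 < k /\ k <= a /\ can_occur qinit delta x k.
have inv : forall n (C E : config Q n), reachable delta C E ->
   (forall i, S (C i)) -> (forall i, S (E i)) \/
   exists r, ~ S r /\ exists N, N <= 2 * a /\ can_occur qinit delta r N.
  move=> n C E; elim=> [C0 H|C0 D0 E0 [i [j [ij [dl oth]]]] _ IH H].
    by left.
  case: (classic (forall l, S (D0 l))) => [HD|HD]; first exact: IH.
  right; have [l Hl] := not_all_ex_not _ _ HD.
  have [[k1 [k10 [k1a C1]]] [k2 [k20 [k2a C2]]]] := (H i, H j).
  have [O1 O2] := @combine Q qinit delta (C0 i) (C0 j) k1 k2 (D0 i) (D0 j) C1 C2 dl.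
  have NN : k1 + k2 <= 2 * a by rewrite mul2n -addnn leq_add.
  case: (eqVneq l i) => [li|li].
    by exists (D0 i); split; [rewrite -li|exists (k1 + k2)].
  case: (eqVneq l j) => [lj|lj].
    by exists (D0 j); split; [rewrite -lj|exists (k1 + k2)].
  by exfalso; apply: Hl; rewrite oth.
have Sinit : forall i, S (init_config qinit b i).
  move=> i; exists 1; split=> //; split=> //.
  exists (init_config qinit 1); split; first exact: reach_refl.
  by exists ord0; rewrite ffunE ffunE.
case: (inv _ _ _ RD Sinit) => [HS|[r [nS [N [N2 CN]]]]].
  have [k [k0 [ka Ck]]] := HS iq; rewrite Hq in Ck.
  by case: (qmin k k0 (leq_ltn_trans ka ab) Ck).
have [m [mN [Cm mmin]]] := @minimal Q qinit delta r N CN.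
have m0 : 0 < m by case: m Cm {mN mmin} => // /(@no_occur0 Q qinit delta r).
have am : a < m.
  rewrite ltnNge; apply/negP => ma; apply: nS; by exists m.
case: (leqP b m) => [bm|mb]; first exact: leq_trans bm (leq_trans mN N2).
exfalso; apply: (gap m am mb); exists r; split=> //; split=> // k _; exact: mmin.
Qed.
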